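(* Let $G$ be a finite group, and let $a_1,a_2,a_3,a_4$ denote independent uniformly random elements of $G$. Then \begin{align*} Pr(a_1a_2a_3a_4=a_2a_1a_4a_3)&=Pr(a_1a_2a_3a_4=a_4a_3a_2a_1)=Pr^4(G)\\ &=\frac{\sum_{x,y\in G}|Stab.Prod_2(x,y)|}{|G|^4}\\ &=\sum_{i,k,j=1}^{c(G)}\frac{|\Omega_j|\cdot c_{i,k;j}(G)^2}{|\Omega_i|\cdot|\Omega_k|\cdot|G|^2}\\ &=\sum_{i,k,j=1}^{c(G)}\frac{|\Omega_j|\cdot c_{i,k;j}(G)\cdot c_{k,i;j}(G)}{|\Omega_i|\cdot|\Omega_k|\cdot|G|^2}. \end{align*}
   Context: $c(G)$ is the number of conjugacy classes of $G$, and $\Omega_1,\dots,\Omega_{c(G)}$ are these classes. $Pr^4(G)$ is the probability that $a_1a_2a_3a_4=a_4a_3a_2a_1$ for independent uniformly random $a_i\in G$. For $g_1,\dots,g_n\in G$, $Stab.Prod_n(g_1,\dots,g_n)$ is the set of all tuples $(b_1,\dots,b_n)\in G^n$ such that $b_1^{-1}g_1b_1\cdot b_2^{-1}g_2b_2\cdots b_n^{-1}g_nb_n=g_1g_2\cdots g_n$. For indices $i_1,\dots,i_n,j$, $c_{i_1,\dots,i_n;j}(G)$ is the number of tuples $(x_1,\dots,x_n)$ with $x_t\in\Omega_{i_t}$ for all $t$ and $x_1x_2\cdots x_n=y$, for a fixed $y\in\Omega_j$. This number does not depend on the choice of $y$. *)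

(* Defs.v *)
From mathcomp Require Import all_boot all_order all_algebra all_fingroup.
Set Implicit Arguments. Unset Strict Implicit. Unset Printing Implicit Defensive.
Import GRing.Theory Num.Theory.
Local Open Scope group_scope.

Definition prob4 (gT : finGroupType) (G : {group gT})
    (P : gT -> gT -> gT -> gT -> bool) : rat :=
  ((\sum_(a1 in G) \sum_(a2 in G) \sum_(a3 in G) \sum_(a4 in G)
       (P a1 a2 a3 a4 : nat))%N)%:R / (#|G| ^ 4)%N%:R.

Definition Pr4 (gT : finGroupType) (G : {group gT}) : rat :=
  prob4 G (fun a1 a2 a3 a4 => a1 * a2 * a3 * a4 == a4 * a3 * a2 * a1).

(* Stab.Prod_2(x, y) = {(b1,b2) in G^2 | b1^-1 x b1 * b2^-1 y b2 = x y}.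
   In mathcomp, x ^ b = b^-1 * x * b. *)
Definition StabProd2 (gT : finGroupType) (G : {group gT}) (x y : gT)
    : {set gT * gT} :=
  [set b : gT * gT | [&& b.1 \in G, b.2 \in G & x ^ b.1 * y ^ b.2 == x * y]].

Definition class_mult (gT : finGroupType) (A B C : {set gT}) : nat :=
  #|[set p : gT * gT | [&& p.1 \in A, p.2 \in B & p.1 * p.2 == repr C]]|.

(* Main.v *)
Require Import Defs.
From mathcomp Require Import all_boot all_order all_algebra all_fingroup.
From mathcomp Require Import ring.
Import GRing.Theory Num.Theory.
Set Implicit Arguments. Unset Strict Implicit. Unset Printing Implicit Defensive.

Local Open Scope group_scope.

Lemma conj_fix (gT : finGroupType) (x c : gT) : (x ^ c == x) = (c \in 'C[x]).
Proof.
apply/eqP/cent1P => h.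
  by rewrite /commute -[in LHS]h conjgE mulKVg.
by rewrite conjgE -h mulKg.
Qed.

Lemma card_fiber (gT : finGroupType) (G : {group gT}) (x p : gT) :
  p \in x ^: G -> #|[set b in G | x ^ b == p]| = #|'C_G[x]|.
Proof.
case/imsetP=> g Gg ->.
rewrite -(card_rcoset 'C_G[x] g); apply: eq_card => b.
rewrite mem_rcoset in_setI inE groupMr ?groupV // -conj_fix conjgM.
by congr (_ && _); rewrite -[RHS](inj_eq (conjg_inj g)) conjgKV.
Qed.

Lemma sum_conj (gT : finGroupType) (G : {group gT}) (x : gT) (F : gT -> nat) :
  \sum_(b in G) F (x ^ b)%g = (#|'C_G[x]| * \sum_(p in x ^: G) F p)%N.
Proof.
rewrite (partition_big (fun b => (x ^ b)%g) (mem (x ^: G))) /=; last first.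
  by move=> b Gb; exact: memJ_class.
rewrite big_distrr /=; apply: eq_bigr => p xGp.
rewrite (eq_bigr (fun _ => F p)); last by move=> b /andP[_ /eqP->].
rewrite sum_nat_const -(card_fiber xGp); congr (_ * _)%N.
by apply: eq_card => b; rewrite inE.
Qed.

Definition cnt (gT : finGroupType) (A B : {set gT}) (z : gT) : nat :=
  \sum_(x in A) \sum_(y in B) ((x * y)%g == z : nat).

Lemma card_Stab (gT : finGroupType) (G : {group gT}) (x y : gT) :
  #|StabProd2 G x y| = \sum_(b1 in G) \sum_(b2 in G) ((x ^ b1 * y ^ b2)%g == (x * y)%g : nat).
Proof.
rewrite pair_big /= -sum1_card big_mkcond [RHS]big_mkcond /=.
apply: eq_bigr => b _; rewrite inE.
by case: (b.1 \in G); case: (b.2 \in G); case: (_ == _).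
Qed.

Lemma class_mult_cnt (gT : finGroupType) (A B C : {set gT}) :
  class_mult A B C = cnt A B (repr C).
Proof.
rewrite /class_mult /cnt pair_big /= -sum1_card big_mkcond [RHS]big_mkcond /=.
apply: eq_bigr => b _; rewrite inE.
by case: (b.1 \in A); case: (b.2 \in B); case: (_ == _).
Qed.

Lemma card_Stab_cnt (gT : finGroupType) (G : {group gT}) (x y : gT) :
  #|StabProd2 G x y| = (#|'C_G[x]| * #|'C_G[y]| * cnt (x ^: G) (y ^: G) (x * y)%g)%N.
Proof.
rewrite card_Stab (sum_conj G x (fun p => \sum_(b2 in G) ((p * y ^ b2)%g == (x * y)%g : nat))).
rewrite -mulnA; congr (_ * _)%N; rewrite /cnt big_distrr /=.
apply: eq_bigr => p _.
by rewrite (sum_conj G y (fun q => ((p * q)%g == (x * y)%g : nat))).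
Qed.

Lemma cnt_conj (gT : finGroupType) (G : {group gT}) (a b z g : gT) :
  g \in G -> cnt (a ^: G) (b ^: G) (z ^ g) = cnt (a ^: G) (b ^: G) z.
Proof.
move=> Gg; rewrite /cnt -{1}(classGidr a Gg) /conjugate big_imset /=; last first.
  by move=> u v _ _; apply: conjg_inj.
apply: eq_bigr => u _.
rewrite -{1}(classGidr b Gg) /conjugate big_imset /=; last first.
  by move=> s t _ _; apply: conjg_inj.
by apply: eq_bigr => v _; rewrite -conjMg (inj_eq (conjg_inj g)).
Qed.

Lemma classes_mem (gT : finGroupType) (G : {group gT}) (A : {set gT}) x :
  A \in classes G -> x \in A -> x \in G /\ x ^: G = A.
Proof.
case/imsetP=> a Ga -> xA; split; last exact/class_eqP.
by case/imsetP: xA => g Gg ->; rewrite groupJ.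
Qed.

Lemma cnt_conj' (gT : finGroupType) (G : {group gT}) (A B : {set gT}) z g :
  A \in classes G -> B \in classes G -> g \in G -> cnt A B (z ^ g) = cnt A B z.
Proof. by case/imsetP=> a _ ->; case/imsetP=> b _ ->; exact: cnt_conj. Qed.

Lemma cnt_class (gT : finGroupType) (G : {group gT}) (A B C : {set gT}) z :
  A \in classes G -> B \in classes G -> C \in classes G -> z \in C ->
  cnt A B z = class_mult A B C.
Proof.
move=> cA cB cC zC; rewrite class_mult_cnt.
have [_ eC] := classes_mem cC zC.
have : repr C \in z ^: G by rewrite eC; exact: (mem_repr_classes cC).
by case/imsetP=> g Gg ->; rewrite (cnt_conj' _ cA cB Gg).
Qed.

Lemma sum_pairs (gT : finGroupType) (G : {group gT}) (A B : {set gT}) :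
  A \in classes G -> B \in classes G ->
  \sum_(x in A) \sum_(y in B) cnt A B (x * y)%g
    = \sum_(C in classes G) (#|C| * class_mult A B C ^ 2)%N.
Proof.
move=> cA cB.
have e1 : forall x y, x \in A -> y \in B ->
    cnt A B (x * y)%g = \sum_(z in G) (((x * y)%g == z : nat) * cnt A B z)%N.
  move=> x y xA yB.
  have xyG : (x * y)%g \in G.
    have [xG _] := classes_mem cA xA; have [yG _] := classes_mem cB yB.
    by rewrite groupM.
  rewrite (bigD1 (x * y)%g) //= eqxx mul1n big1 ?addn0 // => z /andP[_ nz].
  by rewrite eq_sym (negbTE nz).
rewrite (eq_bigr (fun x => \sum_(y in B) \sum_(z in G)
            (((x * y)%g == z : nat) * cnt A B z)%N)); last first.
  by move=> x xA; apply: eq_bigr => y yB; exact: e1.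
rewrite (eq_bigr (fun x => \sum_(z in G) \sum_(y in B)
            (((x * y)%g == z : nat) * cnt A B z)%N)); last first.
  by move=> x _; rewrite exchange_big.
rewrite exchange_big /=.
have /and3P[/eqP covG tI _] := classes_partition G.
rewrite -{1}covG big_trivIset //=.
apply: eq_bigr => C cC.
rewrite (eq_bigr (fun _ => class_mult A B C ^ 2)%N); first by rewrite sum_nat_const.
move=> z zC.
under eq_bigr do rewrite -big_distrl.
by rewrite -big_distrl /= -/(cnt A B z) (cnt_class cA cB cC zC) mulnn.
Qed.

Lemma cnt_sym (gT : finGroupType) (G : {group gT}) (A B : {set gT}) z :
  A \in classes G -> B \in classes G -> cnt A B z = cnt B A z.
Proof.
move=> cA cB; rewrite /cnt [RHS]exchange_big; apply: eq_bigr => x xA.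
have [xG _] := classes_mem cA xA.
case/imsetP: cB => b _ ->.
rewrite -[in RHS](classGidr b (groupVr xG)) /conjugate [in RHS]big_imset /=; last first.
  by move=> u v _ _ /=; apply: conjg_inj.
by apply: eq_bigr => y _; rewrite conjgE invgK -mulgA mulgVK.
Qed.

Lemma sum_by_classes (gT : finGroupType) (G : {group gT}) (F : gT -> rat) :
  (\sum_(x in G) F x = \sum_(A in classes G) \sum_(x in A) F x)%R.
Proof.
have /and3P[/eqP covG tI _] := classes_partition G.
by rewrite -{1}covG big_trivIset.
Qed.

Lemma class_card_neq0 (gT : finGroupType) (G : {group gT}) (A : {set gT}) :
  A \in classes G -> (#|A|%:R : rat) != 0%R.
Proof.
move=> cA; rewrite pnatr_eq0 -lt0n; apply/card_gt0P.
by exists (repr A); exact: (mem_repr_classes cA).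
Qed.

Lemma N4_classes (gT : finGroupType) (G : {group gT}) :
  ((\sum_(x in G) \sum_(y in G) #|StabProd2 G x y|)%N%:R : rat)
  = (\sum_(A in classes G) \sum_(B in classes G)
      ((#|G| ^ 2)%N%:R / (#|A| * #|B|)%N%:R
        * (\sum_(C in classes G) (#|C| * class_mult A B C ^ 2))%N%:R))%R.
Proof.
rewrite natr_sum sum_by_classes; apply: eq_bigr => A cA.
under eq_bigr => x xA do rewrite natr_sum sum_by_classes.
rewrite exchange_big /=; apply: eq_bigr => B cB.
rewrite -(sum_pairs cA cB) natr_sum mulr_sumr; apply: eq_bigr => x xA.
rewrite natr_sum mulr_sumr; apply: eq_bigr => y yB.
have [xG eA] := classes_mem cA xA; have [yG eB] := classes_mem cB yB.
have hx : (#|'C_G[x]| * #|A|)%N = #|G|.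
  by rewrite -eA -index_cent1 Lagrange // subsetIl.
have hy : (#|'C_G[y]| * #|B|)%N = #|G|.
  by rewrite -eB -index_cent1 Lagrange // subsetIl.
have hG : (#|G| ^ 2)%N = (#|'C_G[x]| * #|A| * (#|'C_G[y]| * #|B|))%N.
  by rewrite hx hy mulnn.
rewrite card_Stab_cnt eA eB hG !natrM.
have nA := class_card_neq0 cA; have nB := class_card_neq0 cB.
by field; rewrite nA nB.
Qed.

Lemma sum_lmul (gT : finGroupType) (G : {group gT}) (a : gT) (F : gT -> nat) :
  a \in G -> \sum_(b in G) F b = \sum_(u in G) F (a * u)%g.
Proof.
move=> Ga; rewrite -{1}(lcoset_id Ga) -lcosetE /lcoset big_imset //=.
by move=> u v _ _; exact: mulgI.
Qed.

Lemma sum_rmul (gT : finGroupType) (G : {group gT}) (a : gT) (F : gT -> nat) :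
  a \in G -> \sum_(b in G) F b = \sum_(u in G) F (u * a)%g.
Proof.
move=> Ga; rewrite -{1}(rcoset_id Ga) -rcosetE /rcoset big_imset //=.
by move=> u v _ _; exact: mulIg.
Qed.

Lemma N1_eq (gT : finGroupType) (G : {group gT}) :
  \sum_(a1 in G) \sum_(a2 in G) \sum_(a3 in G) \sum_(a4 in G)
     ((a1 * a2 * a3 * a4)%g == (a2 * a1 * a4 * a3)%g : nat)
  = \sum_(x in G) \sum_(y in G) #|StabProd2 G x y|.
Proof.
transitivity (\sum_(a1 in G) \sum_(u in G) \sum_(a3 in G) \sum_(v in G)
   ((u ^ a1 * v ^ a3)%g == (u * v)%g : nat)).
  apply: eq_bigr => a1 G1; rewrite (sum_lmul _ (groupVr G1)).
  apply: eq_bigr => u _; apply: eq_bigr => a3 G3.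
  rewrite (sum_lmul _ (groupVr G3)); apply: eq_bigr => v _.
  rewrite [in RHS]eq_sym; congr (nat_of_bool (_ == _)).
    by rewrite !mulgA mulgV mul1g mulgK.
  by rewrite !conjgE !mulgA.
rewrite exchange_big; apply: eq_bigr => u _.
under eq_bigr do rewrite exchange_big.
rewrite exchange_big; apply: eq_bigr => v _.
by rewrite card_Stab.
Qed.

Lemma N2_eq (gT : finGroupType) (G : {group gT}) :
  \sum_(a1 in G) \sum_(a2 in G) \sum_(a3 in G) \sum_(a4 in G)
     ((a1 * a2 * a3 * a4)%g == (a4 * a3 * a2 * a1)%g : nat)
  = \sum_(x in G) \sum_(y in G) #|StabProd2 G x y|.
Proof.
transitivity (\sum_(a1 in G) \sum_(u in G) \sum_(a3 in G) \sum_(v in G)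
   ((v ^ a3 * u ^ a1)%g == (u * v)%g : nat)).
  apply: eq_bigr => a1 G1; rewrite (sum_lmul _ (groupVr G1)).
  apply: eq_bigr => u _; apply: eq_bigr => a3 G3.
  rewrite (sum_lmul _ (groupVr G3)); apply: eq_bigr => v _.
  rewrite [in RHS]eq_sym; congr (nat_of_bool (_ == _)).
    by rewrite !mulgA mulgV mul1g mulgK.
  by rewrite !conjgE !mulgA.
rewrite exchange_big [RHS]exchange_big; apply: eq_bigr => u Gu.
under eq_bigr do rewrite exchange_big.
rewrite exchange_big; apply: eq_bigr => v _.
rewrite card_Stab exchange_big (sum_rmul _ Gu).
apply: eq_bigr => b1 _; rewrite (sum_rmul _ Gu).
apply: eq_bigr => b2 _.
have e : ((u * v) ^ u)%g = (v * u)%g by rewrite conjgE !mulgA mulVg mul1g.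
by rewrite -[in LHS](inj_eq (conjg_inj u)) conjMg -!conjgM e.
Qed.

Local Open Scope ring_scope.

Theorem mainTheorem7 (gT : finGroupType) (G : {group gT}) :
  let S1 := prob4 G (fun a1 a2 a3 a4 =>
              (a1 * a2 * a3 * a4 == a2 * a1 * a4 * a3)%g) in
  let S2 := prob4 G (fun a1 a2 a3 a4 =>
              (a1 * a2 * a3 * a4 == a4 * a3 * a2 * a1)%g) in
  let S3 := Pr4 G in
  let S4 := ((\sum_(x in G) \sum_(y in G) #|StabProd2 G x y|)%N%:R
               / (#|G| ^ 4)%N%:R : rat) in
  let S5 := (\sum_(A in classes G) \sum_(B in classes G) \sum_(C in classes G)
               (#|C| * class_mult A B C ^ 2)%N%:R
               / (#|A| * #|B| * #|G| ^ 2)%N%:R : rat)%R in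
  let S6 := (\sum_(A in classes G) \sum_(B in classes G) \sum_(C in classes G)
               (#|C| * class_mult A B C * class_mult B A C)%N%:R
               / (#|A| * #|B| * #|G| ^ 2)%N%:R : rat)%R in
  [/\ S1 = S2, S2 = S3, S3 = S4, S4 = S5 & S5 = S6].
Proof.
move=> S1 S2 S3 S4 S5 S6; split.
- by rewrite /S1 /S2 /prob4 /= N1_eq N2_eq.
- by [].
- by rewrite /S3 /S4 /Pr4 /prob4 /= N2_eq.
- rewrite /S4 /S5 N4_classes mulr_suml; apply: eq_bigr => A cA.
  rewrite mulr_suml; apply: eq_bigr => B cB.
  rewrite natr_sum mulr_sumr mulr_suml; apply: eq_bigr => C cC.
  have nA := class_card_neq0 cA; have nB := class_card_neq0 cB.
  have nG : (#|G|%:R : rat) != 0 by rewrite pnatr_eq0 -lt0n cardG_gt0.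
  rewrite !natrM; field.
  by rewrite nA nB nG.
- rewrite /S5 /S6; apply: eq_bigr => A cA; apply: eq_bigr => B cB.
  apply: eq_bigr => C cC.
  by rewrite !class_mult_cnt (cnt_sym _ cA cB) -mulnn mulnA.
Qed.
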